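(* The map $n\mapsto nXn^{-1}-X$ induces an isomorphism from $N_X\backslash N$ onto $\mathfrak{u}_X$.
   Context: Let $E/F$ be a quadratic extension of number fields with nontrivial automorphism $\sigma$. Let $r\ge1$ and $d_1,\dots,d_r\ge0$ be integers, and let $V_F$ be an $F$-vector space with basis $(e^i_{k,j})_{1\le i\le j\le r,\,1\le k\le d_j}$; $V=V_F\otimes_FE$, $V^i_j$ the $E$-span of $(e^i_{k,j})_k$, so $V=\bigoplus_{1\le i\le j\le r}V^i_j$. Let $\mathfrak{s}$ be the $F$-space of $\sigma$-linear endomorphisms of $V$ (i.e. $X(\lambda v)=\sigma(\lambda)X(v)$), and $H=\mathrm{Res}_{E/F}GL_E(V)$ acting on $\mathfrak{s}$ by conjugation. Let $X\in\mathfrak{s}$ be the $\sigma$-linear map with $Xe^i_{k,j}=e^{i-1}_{k,j}$ for $i>1$ and $Xe^1_{k,j}=0$; let $H_X$ be its centralizer in $H$. Let $\mathfrak{n}=\bigoplus\mathrm{Hom}_E(V^i_j,V^{i'}_{j'})$, sum over pairs with $i>i'$ or ($i=i'$ and $j<j'$), let $N$ be the unipotent $F$-subgroup of $H$ with Lie algebra $\mathfrak{n}$ (i.e. $N=1+\mathfrak{n}$), and $N_X=N\cap H_X$. Let $\mathfrak{u}_X$ be the set of $Y\in\mathfrak{s}$ whose block component from $V^i_j$ to $V^{i'}_{j'}$ is zero except when $1<i$ and ($i-1>i'$ or ($i=i'+1$ and $j<j'$)). All objects are viewed as $F$-varieties. *)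

(* Defs.v *)
From HB Require Import structures.
From mathcomp Require Import all_boot all_order all_algebra all_field.
Set Implicit Arguments. Unset Strict Implicit. Unset Printing Implicit Defensive.
Import GRing.Theory.
Local Open Scope ring_scope.

(* Index set of the basis (e^i_{k,j}) of V, 0-based:
   an index is a tagged triple (j, (i, k)) with j < r, i <= j, k < d j.
   Paper's (i,j,k) corresponds to (i+1, j+1, k+1). *)
Definition Idx (r : nat) (d : 'I_r -> nat) : finType :=
  {j : 'I_r & ('I_j.+1 * 'I_(d j))%type}.

Section Blocks.
Variables (r : nat) (d : 'I_r -> nat).

Definition lvl (x : Idx d) : nat := (tagged x).1.
Definition blk (x : Idx d) : nat := tag x.
Definition cpy (x : Idx d) : nat := (tagged x).2.

Definition dimV : nat := #|{: Idx d}|.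
Definition ix (p : 'I_dimV) : Idx d := enum_val p.

(* entry (q, p) of a matrix = coefficient of e_q in the image of e_p *)
(* block from V^{lvl p}_{blk p} to V^{lvl q}_{blk q} lies in n *)
Definition nPat (q p : 'I_dimV) : bool :=
  (lvl (ix q) < lvl (ix p))%N ||
  ((lvl (ix q) == lvl (ix p)) && (blk (ix p) < blk (ix q))%N).

(* block from V^{lvl p}_{blk p} to V^{lvl q}_{blk q} allowed in u_X *)
Definition uPat (q p : 'I_dimV) : bool :=
  (0 < lvl (ix p))%N &&
  (((lvl (ix q)).+1 < lvl (ix p))%N ||
   (((lvl (ix q)).+1 == lvl (ix p)) && (blk (ix p) < blk (ix q))%N)).

Variable A : comUnitRingType.
Variable tau : A -> A.

(* matrix of X : X(v) = XM * tau(v) in coordinates *)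
Definition XM : 'M[A]_dimV :=
  \matrix_(q, p) ((blk (ix q) == blk (ix p)) && (cpy (ix q) == cpy (ix p))
                  && ((lvl (ix q)).+1 == lvl (ix p)))%:R.

(* A-points of N = 1 + n *)
Definition inN (n : 'M[A]_dimV) : Prop :=
  forall q p, ~~ nPat q p -> n q p = (q == p)%:R.

(* A-points of u_X (sigma-linear maps, given by their matrices) *)
Definition inU (Y : 'M[A]_dimV) : Prop :=
  forall q p, ~~ uPat q p -> Y q p = 0.

(* conjugation action of H on s: h o Y o h^{-1} has matrix h Y tau(h)^{-1} *)
Definition conjS (h Y : 'M[A]_dimV) : 'M[A]_dimV :=
  h *m Y *m invmx (map_mx tau h).

(* A-points of N_X = N \cap H_X *)
Definition inNX (m : 'M[A]_dimV) : Prop := inN m /\ conjS m XM = XM.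

Definition fX (n : 'M[A]_dimV) : 'M[A]_dimV := conjS n XM - XM.

End Blocks.

(* Main.v *)
Require Import Defs.
From HB Require Import structures.
From mathcomp Require Import all_boot all_order all_algebra all_field zify.
Set Implicit Arguments. Unset Strict Implicit. Unset Printing Implicit Defensive.
Import GRing.Theory.
Local Open Scope ring_scope.

Section Gen.
Variables (R : comUnitRingType) (m : nat) (key : 'I_m -> nat).

Definition strict (M : 'M[R]_m) := forall q p, ~~ (key q < key p)%N -> M q p = 0.
Definition Ngen (M : 'M[R]_m) := forall q p, ~~ (key q < key p)%N -> M q p = (q == p)%:R.

Lemma Ngen_mul A B : Ngen A -> Ngen B -> Ngen (A *m B).
Proof.
move=> hA hB q p hqp; rewrite mxE (bigD1 q) //=.
rewrite (hA q q) ?ltnn // eqxx mul1r (hB q p) //.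
rewrite big1 ?addr0 // => a naq.
case: (ltnP (key q) (key a)) => hqa.
  rewrite (hB a p); last by apply: contra hqp => h; exact: ltn_trans hqa h.
  case: eqP => [eap|]; last by rewrite mulr0.
  by move: hqp hqa; rewrite eap => /negP.
by rewrite (hA q a) 1?eq_sym ?(negbTE naq) ?mul0r // -leqNgt.
Qed.
Definition Pw (nu : 'M[R]_m) k := iter k (mulmx nu) 1%:M.

Lemma Pw_zero nu k q p : strict nu -> ~~ (key q + k <= key p)%N -> Pw nu k q p = 0.
Proof.
move=> hnu; elim: k q p => [|k IH] q p h.
  rewrite /Pw /= mxE; case: eqP => // eqp; move: h; rewrite eqp addn0 leqnn //.
rewrite /Pw /= mxE big1 // => a _.
case: (ltnP (key q) (key a)) => hqa.
  rewrite -/(Pw nu k) IH ?mulr0 //; rewrite -ltnNge in h *; lia.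
by rewrite hnu ?mul0r // -leqNgt.
Qed.

Lemma Ngen_inv M : Ngen M -> M \in unitmx /\ Ngen (invmx M).
Proof.
move=> hM.
set nu := 1%:M - M.
have hnu : strict nu by move=> q p h; rewrite /nu !mxE (hM q p h) subrr.
set K := (\max_(p : 'I_m) key p).+1.
set S := \sum_(k < K) Pw nu k.
have tel : forall K', M *m (\sum_(k < K') Pw nu k) = 1%:M - Pw nu K'.
  elim=> [|K' IH]; first by rewrite big_ord0 mulmx0 /Pw /= subrr.
  rewrite big_ord_recr /= mulmxDr IH.
  have -> : M = 1%:M - nu by rewrite /nu opprB addrC subrK.
  rewrite mulmxBl mul1mx /Pw /=; set P := iter _ _ _.
  by rewrite addrA subrK.
have PK : Pw nu K = 0.
  apply/matrixP => q p; rewrite [RHS]mxE Pw_zero //; rewrite -ltnNge.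
  have : (key p <= \max_(p : 'I_m) key p)%N by exact: leq_bigmax.
  rewrite /K; lia.
have MS : M *m S = 1%:M by rewrite tel PK subr0.
have [uM _] := mulmx1_unit MS.
have invS : invmx M = S.
  by rewrite -[invmx M]mulmx1 -MS mulmxA mulVmx // mul1mx.
split => //; rewrite invS => q p h.
rewrite /S; have [K' ->] : exists K', K = K'.+1 by exists (\max_(p : 'I_m) key p).
rewrite summxE big_ord_recl big1 ?addr0.
  by rewrite /Pw /= mxE.
move=> k _; rewrite Pw_zero //; apply: contra h; rewrite lift0; lia.
Qed.
End Gen.

Section Idx.
Variables (r : nat) (d : 'I_r -> nat).
Local Notation mV := (dimV d).

Lemma blk_lt (x : Idx d) : (blk x < r)%N.
Proof. exact: ltn_ord. Qed.
Lemma lvl_le (x : Idx d) : (lvl x <= blk x)%N.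
Proof. rewrite /lvl /blk -ltnS; exact: ltn_ord. Qed.

Lemma idx_inj (q p : 'I_mV) : lvl (ix q) = lvl (ix p) -> blk (ix q) = blk (ix p) ->
  cpy (ix q) = cpy (ix p) -> q = p.
Proof.
move=> h1 h2 h3; apply: enum_val_inj; move: h1 h2 h3; rewrite /ix.
case: (enum_val q) => j [a b]; case: (enum_val p) => j' [a' b'].
rewrite /lvl /blk /cpy /= => h1 h2 h3.
have ej : j = j' by apply: val_inj.
subst j'.
have -> : a = a' by apply: val_inj.
by have -> : b = b' by apply: val_inj.
Qed.

Definition mk (j : 'I_r) (i : nat) (hi : (i <= j)%N) (k : 'I_(d j)) : 'I_mV :=
  enum_rank (Tagged (fun j : 'I_r => ('I_j.+1 * 'I_(d j))%type) (@Ordinal j.+1 i hi, k) : Idx d).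

Lemma mk_ix j i hi k : lvl (ix (@mk j i hi k)) = i /\ blk (ix (mk hi k)) = j /\ cpy (ix (mk hi k)) = k.
Proof. by rewrite /mk /ix enum_rankK. Qed.

Definition key (p : 'I_mV) : nat := (lvl (ix p) * r.+1 + (r - blk (ix p)))%N.

Lemma nPat_key q p : nPat q p = (key q < key p)%N.
Proof.
rewrite /nPat /key.
have := blk_lt (ix q); have := blk_lt (ix p).
set lq := lvl (ix q); set lp := lvl (ix p); set bq := blk (ix q); set bp := blk (ix p).
move=> hp hq.
apply/idP/idP.
  case/orP => [h|/andP[/eqP e h]]; last by rewrite e; lia.

  have : (lq.+1 * r.+1 <= lp * r.+1)%N by rewrite leq_mul2r h orbT.
  lia.
move=> h; case: (ltngtP lq lp) => [//|c|e].
  have : (lp.+1 * r.+1 <= lq * r.+1)%N by rewrite leq_mul2r c orbT.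
  lia.
lia.
Qed.

Lemma inN_Ngen (A : comUnitRingType) (n : 'M[A]_mV) : inN n <-> Ngen key n.
Proof.
split => h q p hqp; apply: h; by rewrite ?nPat_key // -nPat_key.
Qed.
End Idx.

Section Spec.
Variables (r : nat) (d : 'I_r -> nat) (A : comUnitRingType) (tau : {rmorphism A -> A}).
Local Notation mV := (dimV d).
Local Notation X := (XM d A).

Lemma XM_E q p : X q p = ((blk (ix q) == blk (ix p)) && (cpy (ix q) == cpy (ix p))
                  && ((lvl (ix q)).+1 == lvl (ix p)))%:R.
Proof. by rewrite mxE. Qed.

Lemma core_u (n m : 'M[A]_mV) q p a b : inN n -> inN m -> ~~ uPat q p ->
  (a != q) || (b != p) -> n q a * X a b * m b p = 0.
Proof.
move=> hn hm hu hab.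
rewrite XM_E.
case: (boolP (_ && _)) => hx; last by rewrite mulr0 mul0r.
move: hx => /andP[/andP[/eqP eb /eqP ec] /eqP el].
case: (boolP (nPat q a)) => hqa; last first.
  case: (eqVneq a q) => [eaq|naq]; last by rewrite hn // eq_sym (negbTE naq) !mul0r.
  subst a.
  case: (boolP (nPat b p)) => hbp; last first.
    by move: hab; rewrite eqxx /= => nbp; rewrite (hm b p hbp) (negbTE nbp) mulr0.
  exfalso; move: hu hbp; rewrite /uPat /nPat; lia.
case: (boolP (nPat b p)) => hbp; last first.
  case: (eqVneq b p) => [ebp|nbp]; last by rewrite (hm b p hbp) (negbTE nbp) mulr0.
  subst b; exfalso; move: hu hqa; rewrite /uPat /nPat; lia.
exfalso; move: hu hqa hbp; rewrite /uPat /nPat; lia.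
Qed.

Lemma conj_u (n m : 'M[A]_mV) q p : inN n -> inN m -> ~~ uPat q p ->
  (n *m X *m m) q p = X q p.
Proof.
move=> hn hm hu.
rewrite mxE (bigD1 p) //= mxE mulr_suml (bigD1 q) //=.
rewrite big1; last first.
  by move=> a naq; rewrite (core_u (a:=a) (b:=p) hn hm hu) ?naq.
rewrite addr0 big1; last first.
  move=> b nbp; rewrite mxE mulr_suml big1 // => a _.
  by rewrite (core_u (a:=a) (b:=b) hn hm hu) ?nbp ?orbT.
have hnqq : n q q = 1 by rewrite hn /nPat ?ltnn ?eqxx //= ltnn.
have hmpp : m p p = 1 by rewrite hm /nPat ?ltnn ?eqxx //= ltnn.
by rewrite addr0 hnqq hmpp mul1r mulr1.
Qed.

Lemma inN_unit (n : 'M[A]_mV) : inN n -> n \in unitmx /\ inN (invmx n).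
Proof.
move=> /inN_Ngen h; have [u hi] := Ngen_inv h; split => //; exact/inN_Ngen.
Qed.

Lemma inN_mul (n m : 'M[A]_mV) : inN n -> inN m -> inN (n *m m).
Proof. move=> /inN_Ngen h1 /inN_Ngen h2; apply/inN_Ngen; exact: Ngen_mul. Qed.

Lemma inN_map (n : 'M[A]_mV) : inN n -> inN (map_mx tau n).
Proof. by move=> h q p hqp; rewrite mxE h // rmorph_nat. Qed.

Lemma unit_map (a : 'M[A]_mV) : a \in unitmx -> map_mx tau a \in unitmx.
Proof. by rewrite !unitmxE det_map_mx; apply: rmorph_unit. Qed.

Lemma inv_eq (a b : 'M[A]_mV) : a *m b = 1%:M -> invmx a = b.
Proof.
move=> ab; have [ua _] := mulmx1_unit ab.
by rewrite -[invmx a]mulmx1 -ab mulmxA mulVmx // mul1mx.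
Qed.

Lemma conjS_mul (a b Y : 'M[A]_mV) : a \in unitmx -> b \in unitmx ->
  conjS tau (a *m b) Y = conjS tau a (conjS tau b Y).
Proof.
move=> ua ub; rewrite /conjS map_mxM.
have ua' := unit_map ua; have ub' := unit_map ub.
have -> : invmx (map_mx tau a *m map_mx tau b) = invmx (map_mx tau b) *m invmx (map_mx tau a).
  apply: inv_eq; rewrite mulmxA -(mulmxA (map_mx tau a)) mulmxV // mulmx1 mulmxV //.
by rewrite !mulmxA.
Qed.

Lemma conjS1 (Y : 'M[A]_mV) : conjS tau 1%:M Y = Y.
Proof. by rewrite /conjS map_mx1 invmx1 mul1mx mulmx1. Qed.

Lemma part1 (n : 'M[A]_mV) : inN n -> inU (fX tau n).
Proof.
move=> hn q p hu; have [_ hi] := inN_unit (inN_map hn).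
rewrite /fX /conjS mxE (conj_u hn hi hu) ?mxE ?subrr //.
Qed.

Lemma part2 (n1 n2 : 'M[A]_mV) : inN n1 -> inN n2 ->
        (fX tau n1 = fX tau n2 <-> exists2 m, inNX tau m & n1 = n2 *m m).
Proof.
move=> h1 h2.
have [u1 _] := inN_unit h1; have [u2 hi2] := inN_unit h2.
have ui2 : invmx n2 \in unitmx by rewrite unitmx_inv.
split.
  move=> e; have e' : conjS tau n1 X = conjS tau n2 X.
    by have := congr1 (fun M => M + X) e; rewrite /fX !subrK.
  exists (invmx n2 *m n1); last by rewrite mulmxA mulmxV // mul1mx.
  split; first exact: inN_mul.
  by rewrite conjS_mul // e' -conjS_mul // mulVmx // conjS1.
case=> m [hm hc] ->.
have [um _] := inN_unit hm.
by rewrite /fX conjS_mul // hc.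
Qed.

Section Surj.
Variables (Y : 'M[A]_mV) (hY : inU Y).
Let ZM := X + Y.
Definition Zop (v : 'I_mV -> A) : 'I_mV -> A := fun q => \sum_a ZM q a * tau (v a).

Lemma ZM0 q a : (lvl (ix a) <= lvl (ix q))%N -> ZM q a = 0.
Proof.
move=> h; rewrite /ZM mxE XM_E hY; last by rewrite /uPat; lia.
have -> : ((lvl (ix q)).+1 == lvl (ix a)) = false by apply/eqP; lia.
by rewrite andbF addr0.
Qed.

Definition LB (v : 'I_mV -> A) l := forall q, (l <= lvl (ix q))%N -> v q = 0.

Lemma LB_Zop v l : LB v l.+1 -> LB (Zop v) l.
Proof.
move=> h q hq; rewrite /Zop big1 // => a _.
case: (leqP (lvl (ix a)) (lvl (ix q))) => ha; first by rewrite ZM0 // mul0r.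
by rewrite h ?rmorph0 ?mulr0 //; lia.
Qed.

Lemma LB_iter v l k : LB v (l + k) -> LB (iter k Zop v) l.
Proof.
elim: k v l => [|k IH] v l h /=; first by rewrite addn0 in h.
apply: LB_Zop; apply: (IH v l.+1); by rewrite addSn -addnS.
Qed.

Definition ev (c : 'I_mV) : 'I_mV -> A := fun q => (q == c)%:R.

Definition top (p : 'I_mV) : 'I_mV :=
  @mk r d (tag (ix p)) (tag (ix p)) (leqnn _) (tagged (ix p)).2.

Lemma top_ix p : lvl (ix (top p)) = blk (ix p) /\ blk (ix (top p)) = blk (ix p)
  /\ cpy (ix (top p)) = cpy (ix p).
Proof. by rewrite /top; have [-> [-> ->]] := mk_ix (leqnn (tag (ix p))) (tagged (ix p)).2. Qed.

Definition ff (p : 'I_mV) := iter (blk (ix p) - lvl (ix p)) Zop (ev (top p)).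

Definition Gd (p : 'I_mV) (v : 'I_mV -> A) := forall q, ~~ nPat q p -> v q = (q == p)%:R.

Lemma Zop_good p p' v : lvl (ix p) = (lvl (ix p')).+1 -> blk (ix p) = blk (ix p') ->
  cpy (ix p) = cpy (ix p') -> Gd p v -> Gd p' (Zop v).
Proof.
move=> el eb ec hv q hq.
rewrite /Zop (bigD1 p) //= big1 ?addr0.
  rewrite hv; last by rewrite /nPat ltnn eqxx /= ltnn.
  rewrite eqxx rmorph1 mulr1 /ZM mxE XM_E hY ?addr0; last first.
    by move: hq; rewrite /uPat /nPat; lia.
  congr ((nat_of_bool _)%:R); apply/idP/idP.
    move=> /andP[/andP[/eqP h1 /eqP h2] /eqP h3]; apply/eqP; apply: idx_inj; lia.
  by move=> /eqP ->; rewrite el eb ec !eqxx.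
move=> a nap.
case: (boolP (nPat a p)) => hap; last by rewrite (hv a hap) (negbTE nap) rmorph0 mulr0.
rewrite /ZM mxE XM_E hY; last by move: hq hap; rewrite /uPat /nPat; lia.
case: (boolP (_ && _)) => hx; last by rewrite addr0 mul0r.
exfalso; move: hx => /andP[/andP[/eqP h1 /eqP h2] /eqP h3].
by move: hq hap; rewrite /nPat; lia.
Qed.

Lemma ff_good p : Gd p (ff p).
Proof.
move: {2}(blk (ix p) - lvl (ix p))%N (erefl (blk (ix p) - lvl (ix p))%N) => k.
elim: k p => [|k IH] p hk.
  have hl := lvl_le (ix p).
  have tp : top p = p.
    have [a1 [a2 a3]] := top_ix p; apply: idx_inj; lia.
  by rewrite /ff hk /= tp => q _.
have hl : (lvl (ix p) < blk (ix p))%N by lia.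
set pu := @mk r d (tag (ix p)) (lvl (ix p)).+1 hl (tagged (ix p)).2.
have [u1 [u2 u3]] : lvl (ix pu) = (lvl (ix p)).+1 /\ blk (ix pu) = blk (ix p) /\ cpy (ix pu) = cpy (ix p).
  exact: mk_ix.
have tpu : top pu = top p.
  have [a1 [a2 a3]] := top_ix p; have [b1 [b2 b3]] := top_ix pu; apply: idx_inj; lia.
have := IH pu; rewrite /ff u1 u2 tpu hk => /(_ _) H.
have H' := H ltac:(lia).
rewrite iterS; apply: (@Zop_good pu) => //.
have -> : k = (blk (ix p) - (lvl (ix p)).+1)%N by lia.
exact: H'.
Qed.

Definition nn : 'M[A]_mV := \matrix_(q, p) ff p q.

Lemma nn_inN : inN nn.
Proof. by move=> q p hqp; rewrite mxE ff_good. Qed.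

Lemma nn_eq : nn *m X = ZM *m map_mx tau nn.
Proof.
apply/matrixP => q p.
have R : (ZM *m map_mx tau nn) q p = Zop (ff p) q.
  by rewrite mxE /Zop; apply: eq_bigr => a _; rewrite [map_mx _ _ _ _]mxE [nn _ _]mxE.
have L : (nn *m X) q p = \sum_a ff a q * X a p.
  by rewrite mxE; apply: eq_bigr => a _; rewrite [nn _ _]mxE.
rewrite R L.
have hlb := lvl_le (ix p).
case El: (lvl (ix p)) => [|l].
  rewrite big1; last first.
    by move=> a _; rewrite XM_E El andbF mulr0.
  have := @LB_iter (ev (top p)) 0 (blk (ix p)).+1.
  rewrite /ff El subn0 /= => H; rewrite H // => c hc.
  rewrite /ev; case: eqP => // ec; have [t1 _] := top_ix p.
  by move: hc; rewrite ec t1; lia.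
have hl : (l <= tag (ix p))%N by move: hlb; rewrite El /blk; lia.
set pd := @mk r d (tag (ix p)) l hl (tagged (ix p)).2.
have [u1 [u2 u3]] : lvl (ix pd) = l /\ blk (ix pd) = blk (ix p) /\ cpy (ix pd) = cpy (ix p).
  exact: mk_ix.
rewrite (bigD1 pd) //= big1 ?addr0; last first.
  move=> a nap; rewrite XM_E; case: (boolP (_ && _)) => hx; last by rewrite mulr0.
  exfalso; move: hx => /andP[/andP[/eqP h1 /eqP h2] /eqP h3].
  by move: nap; rewrite (_ : a = pd) ?eqxx //; apply: idx_inj; lia.
rewrite XM_E u2 u3 u1 El !eqxx mulr1.
have tpd : top pd = top p.
  have [a1 [a2 a3]] := top_ix p; have [b1 [b2 b3]] := top_ix pd; apply: idx_inj; lia.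
rewrite /ff u1 u2 tpd El.
have -> : (blk (ix p) - l)%N = (blk (ix p) - l.+1)%N.+1 by lia.
by [].
Qed.

Lemma part3 : exists2 n, inN n & fX tau n = Y.
Proof.
exists nn; first exact: nn_inN.
have [u _] := inN_unit nn_inN.
rewrite /fX /conjS nn_eq mulmxK ?unit_map //. by rewrite /ZM addrAC subrr add0r.
Qed.
End Surj.
End Spec.

Theorem lemma2p6p1
  (E : fieldExtType rat) (F : {subfield E}) (sigma : 'End(E))
  (hquad : \dim {:E} = (2 * \dim F)%N)
  (hsigma : kAut F fullv sigma) (hnontriv : sigma != \1%VF)
  (r : nat) (hr : (0 < r)%N) (d : 'I_r -> nat)
  (A : comUnitRingType) (iota : {rmorphism E -> A}) (tau : {rmorphism A -> A})
  (htau_inv : involutive tau) (htau_iota : forall x : E, tau (iota x) = iota (sigma x)) :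
  (forall n : 'M[A]_(dimV d), inN n -> inU (fX tau n))
  /\ (forall n1 n2 : 'M[A]_(dimV d), inN n1 -> inN n2 ->
        (fX tau n1 = fX tau n2 <-> exists2 m, inNX tau m & n1 = n2 *m m))
  /\ (forall Y : 'M[A]_(dimV d), inU Y -> exists2 n, inN n & fX tau n = Y).
Proof.
split; first exact: part1.
split; first exact: part2.
move=> Y hY; exact: part3.
Qed.
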